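(* Let $\mathcal{X}$ (contexts), $\mathcal{A}$ (actions) and $\mathcal{Y}\subseteq\mathbb{R}$ (outcomes) be spaces, let $p(x)$ be a context density and $p(y\mid x,a)$ an outcome density. For a behaviour policy $\pi^b(a\mid x)$ and a target policy $\pi^*(a\mid x)$ define the joint densities $p_{\pi^b}(x,a,y)=p(y\mid x,a)\,\pi^b(a\mid x)\,p(x)$ and $p_{\pi^*}(x,a,y)=p(y\mid x,a)\,\pi^*(a\mid x)\,p(x)$, with $Y$-marginals $p_{\pi^b}(y)$ and $p_{\pi^*}(y)$. Assume $\pi^*(a\mid x)>0\Rightarrow \pi^b(a\mid x)>0$ for all $x,a$. Let $w(y)=p_{\pi^*}(y)/p_{\pi^b}(y)$ and $\rho(a,x)=\pi^*(a\mid x)/\pi^b(a\mid x)$. Then $w(y)=\mathbb{E}_{\pi^b}[\rho(A,X)\mid Y=y]$, and $$w=\arg\min_f \mathbb{E}_{\pi^b}\big[(\rho(A,X)-f(Y))^2\big].$$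
   Context: $\mathbb{E}_{\pi^b}$ denotes expectation with $(X,A,Y)\sim p_{\pi^b}(x,a,y)$. The minimum is over measurable functions $f:\mathcal{Y}\to\mathbb{R}$. *)

(* Defs.v *)
From HB Require Import structures.
From mathcomp Require Import all_boot all_order all_algebra.
From mathcomp Require Import all_classical all_reals all_analysis.
Set Implicit Arguments. Unset Strict Implicit. Unset Printing Implicit Defensive.
Import Order.TTheory GRing.Theory Num.Theory.
Local Open Scope classical_set_scope.
Local Open Scope ring_scope.

Section OPE.
Context {d1 d2 : measure_display} {X : measurableType d1} {A : measurableType d2}
  {R : realType}.

(* joint density p_pi(x,a,y) = p(y|x,a) pi(a|x) p(x), on (X * A) * R.
   pX x = p(x), pY x a y = p(y|x,a), pi x a = pi(a|x). *)
Definition joint_density (pX : X -> R) (pY : X -> A -> R -> R) (pi : X -> A -> R)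
  (z : (X * A) * R) : R :=
  pY z.1.1 z.1.2 z.2 * pi z.1.1 z.1.2 * pX z.1.1.

Definition Epi (muX : {measure set X -> \bar R}) (muA : {measure set A -> \bar R})
  (nu : {sigma_finite_measure set R -> \bar R})
  (pX : X -> R) (pY : X -> A -> R -> R) (pi : X -> A -> R)
  (h : (X * A) * R -> \bar R) : \bar R :=
  (\int[(muX \x muA) \x nu]_z (h z * (joint_density pX pY pi z)%:E))%E.

Definition marginal_Y (muX : {measure set X -> \bar R}) (muA : {measure set A -> \bar R})
  (pX : X -> R) (pY : X -> A -> R -> R) (pi : X -> A -> R) (y : R) : \bar R :=
  (\int[muX \x muA]_xa (pY xa.1 xa.2 y * pi xa.1 xa.2 * pX xa.1)%:E)%E.

Definition is_cond_exp_given_Y (E : ((X * A) * R -> \bar R) -> \bar R)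
  (h : (X * A) * R -> R) (g : R -> R) : Prop :=
  measurable_fun [set: R] g /\
  forall B : set R, measurable B ->
    E (fun z => (h z * \1_B z.2)%:E) = E (fun z => (g z.2 * \1_B z.2)%:E).

Definition rho_of (pis pib : X -> A -> R) (z : (X * A) * R) : R :=
  pis z.1.1 z.1.2 / pib z.1.1 z.1.2.

Definition w_of (muX : {measure set X -> \bar R}) (muA : {measure set A -> \bar R})
  (pX : X -> R) (pY : X -> A -> R -> R) (pis pib : X -> A -> R) (y : R) : R :=
  fine (marginal_Y muX muA pX pY pis y) / fine (marginal_Y muX muA pX pY pib y).

End OPE.

(* Main.v *)
Require Import Defs.
From HB Require Import structures.
From mathcomp Require Import all_boot all_order all_algebra.
From mathcomp Require Import all_classical all_reals all_analysis.
From mathcomp Require Import measurable_realfun.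
From mathcomp Require Import ring lra.
Import Order.TTheory GRing.Theory Num.Theory.
Local Open Scope classical_set_scope.
Local Open Scope ring_scope.

Lemma minv (R : realType) : measurable_fun [set: R] (@GRing.inv R).
Proof.
have -> : [set: R] = [set 0] `|` [set x | x != 0].
  apply/seteqP; split => x //= _; case: (eqVneq x 0) => [->|x0]; [left|right] => //.
apply/measurable_funU => //.
  rewrite [X in measurable X](_ : _ = ~` [set (0:R)]); first exact: measurableC.
  by apply/seteqP; split => x /= /eqP.
split; first exact: measurable_fun_set1.
apply: open_continuous_measurable_fun; first exact: open_neq.
by move=> x /set_mem /= x0; exact: inv_continuous.
Qed.

Section Helpers.
Context d (T : measurableType d) (R : realType).
Variable mu : {measure set T -> \bar R}.

Lemma intD (f g : T -> R) : measurable_fun setT f -> measurable_fun setT g ->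
  (forall x, 0 <= f x) -> (forall x, 0 <= g x) ->
  (\int[mu]_x (f x + g x)%:E = \int[mu]_x (f x)%:E + \int[mu]_x (g x)%:E)%E.
Proof.
move=> mf mg f0 g0.
under eq_integral do rewrite EFinD.
apply: ge0_integralD => //.
- by move=> x _; rewrite lee_fin.
- exact/measurable_EFinP.
- by move=> x _; rewrite lee_fin.
- exact/measurable_EFinP.
Qed.

Lemma intZ (k : R) (f : T -> R) : measurable_fun setT f -> 0 <= k ->
  (forall x, 0 <= f x) ->
  (\int[mu]_x (k * f x)%:E = k%:E * \int[mu]_x (f x)%:E)%E.
Proof.
move=> mf k0 f0.
under eq_integral do rewrite EFinM.
apply: ge0_integralZl_EFin => //.
- by move=> x _; rewrite lee_fin.
- exact/measurable_EFinP.
Qed.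

Lemma var_min (r q : T -> R) (w c M S : R) :
  measurable_fun setT r -> measurable_fun setT q ->
  (forall x, 0 <= r x) -> (forall x, 0 <= q x) -> 0 <= w ->
  (\int[mu]_x (q x)%:E = M%:E)%E -> (\int[mu]_x (r x * q x)%:E = S%:E)%E ->
  S = w * M ->
  (\int[mu]_x ((r x - w) ^+ 2 * q x)%:E <= \int[mu]_x ((r x - c) ^+ 2 * q x)%:E)%E.
Proof.
move=> mr mq r0 q0 w0 hM hS hSM.
have M0 : 0 <= M.
  by rewrite -lee_fin -hM; apply: integral_ge0 => x _; rewrite lee_fin.
have [a [b [a0 [b0 hab]]]] : exists a b : R, [/\ 0 <= a, 0 <= b & c = w - (a - b)].
  case: (leP c w) => h.
    exists (w - c), 0; split => //; first by rewrite subr_ge0.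
    by rewrite subr0 opprB addrC subrK.
  exists 0, (c - w); split => //; first by rewrite subr_ge0 ltW.
  by rewrite sub0r opprK addrC subrK.
have key x : (r x - c) ^+ 2 * q x + ((2 * a * w) * q x + (2 * b) * (r x * q x)) =
   (r x - w) ^+ 2 * q x + ((2 * a) * (r x * q x) + ((2 * b * w) * q x + (a - b) ^+ 2 * q x)).
  rewrite hab; ring.
have mrq : measurable_fun setT (fun x => r x * q x) by exact: measurable_funM.
have msq (e : R) : measurable_fun setT (fun x => (r x - e) ^+ 2 * q x).
  apply: measurable_funM => //; apply: measurable_funX; exact: measurable_funB.
have mkq (k : R) : measurable_fun setT (fun x => k * q x) by apply: measurable_funM.
have mkrq (k : R) : measurable_fun setT (fun x => k * (r x * q x)) by apply: measurable_funM.
have sq0 (e : R) x : 0 <= (r x - e) ^+ 2 * q x by rewrite mulr_ge0 // sqr_ge0.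
have kq0 (k : R) : 0 <= k -> forall x, 0 <= k * q x by move=> k0 x; rewrite mulr_ge0.
have krq0 (k : R) : 0 <= k -> forall x, 0 <= k * (r x * q x) by move=> k0 x; rewrite !mulr_ge0.
have e2a : 0 <= 2 * a * w by rewrite !mulr_ge0.
have e2b : 0 <= 2 * b by rewrite !mulr_ge0.
have e2a' : 0 <= 2 * a by rewrite !mulr_ge0.
have e2bw : 0 <= 2 * b * w by rewrite !mulr_ge0.
have eab : 0 <= (a - b) ^+ 2 by rewrite sqr_ge0.
have H0 := congr1 (fun g : T -> R => (\int[mu]_x (g x)%:E)%E) (funext key).
move: H0 => /=.
rewrite (intD _ _ (msq c) (measurable_funD (mkq _) (mkrq _)) (sq0 c)
   (fun x => addr_ge0 (kq0 _ e2a x) (krq0 _ e2b x))).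
rewrite (intD _ _ (mkq _) (mkrq _) (kq0 _ e2a) (krq0 _ e2b)).
rewrite (intD _ _ (msq w) (measurable_funD (mkrq _) (measurable_funD (mkq _) (mkq _))) (sq0 w)
   (fun x => addr_ge0 (krq0 _ e2a' x) (addr_ge0 (kq0 _ e2bw x) (kq0 _ eab x)))).
rewrite (intD _ _ (mkrq _) (measurable_funD (mkq _) (mkq _)) (krq0 _ e2a')
   (fun x => addr_ge0 (kq0 _ e2bw x) (kq0 _ eab x))).
rewrite (intD _ _ (mkq _) (mkq _) (kq0 _ e2bw) (kq0 _ eab)).
have rq0 x : 0 <= r x * q x by rewrite mulr_ge0.
rewrite !(intZ _ _ mq) // !(intZ _ _ mrq) // hM hS.
rewrite hSM => H.
move: H; rewrite -!EFinM -!EFinD.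
set Iw := (\int[mu]_x ((r x - w) ^+ 2 * q x)%:E)%E.
set Ic := (\int[mu]_x ((r x - c) ^+ 2 * q x)%:E)%E.
set K1 := (2 * a * w * M + 2 * b * (w * M)).
move=> H.
rewrite -(@leeD2rE _ K1%:E) // H.
apply: leeD2l; rewrite lee_fin /K1.
have -> : 2 * a * (w * M) + (2 * b * w * M + (a - b) ^+ 2 * M) =
   (2 * a * w * M + 2 * b * (w * M)) + (a - b) ^+ 2 * M by ring.
by rewrite lerDl mulr_ge0.
Qed.

End Helpers.

Section PM.
Local Open Scope ereal_scope.
Context d1 d2 (T1 : measurableType d1) (T2 : measurableType d2) (R : realType).
Variable m1 : {sigma_finite_measure set T1 -> \bar R}.
Variable m2 : {sigma_finite_measure set T2 -> \bar R}.

Definition pm := (m1 \x m2)%E.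
HB.instance Definition _ := Measure.on pm.

Lemma pm_sigma_finite : sigma_finite setT pm.
Proof.
have /sigma_finiteP[F [TF ndF Foo]] := sigma_finiteT m1.
have /sigma_finiteP[G [TG ndG Goo]] := sigma_finiteT m2.
exists (fun n => F n `*` G n).
 rewrite -setXTT TF TG predeqE => -[x y]; split.
    move=> [/= [n _ Fnx] [k _ Gky]]; exists (maxn n k) => //; split.
    - by move: x Fnx; exact/subsetPset/ndF/leq_maxl.
    - by move: y Gky; exact/subsetPset/ndG/leq_maxr.
  by move=> [n _ []/= ? ?]; split; exists n.
move=> k; have [? ?] := Foo k; have [? ?] := Goo k.
split; first exact: measurableX.
by rewrite /pm product_measure1E// lte_mul_pinfty// ge0_fin_numE.
Qed.

HB.instance Definition _ := Measure_isSigmaFinite.Build _ _ _ pm pm_sigma_finite.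
End PM.
Arguments pm {d1 d2 T1 T2 R} m1 m2.

Section Main.
Context (d1 d2 : measure_display) (X : measurableType d1)
  (A : measurableType d2) (R : realType)
  (muX : {sigma_finite_measure set X -> \bar R})
  (muA : {sigma_finite_measure set A -> \bar R})
  (nu : {sigma_finite_measure set R -> \bar R})
  (pX : X -> R) (pY : X -> A -> R -> R) (pib pis : X -> A -> R)
  (pX_ge0 : forall x, 0 <= pX x)
  (pX_meas : measurable_fun [set: X] pX)
  (pX_int1 : (\int[muX]_x (pX x)%:E = 1)%E)
  (pY_ge0 : forall x a y, 0 <= pY x a y)
  (pY_meas : measurable_fun [set: (X * A) * R] (fun z => pY z.1.1 z.1.2 z.2))
  (pY_int1 : forall x a, (\int[nu]_y (pY x a y)%:E = 1)%E).

Let jd := joint_density pX pY.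

Lemma mjd (pi : X -> A -> R) :
  measurable_fun [set: (X * A)%type] (fun xa => pi xa.1 xa.2) ->
  measurable_fun [set: ((X * A) * R)%type] (jd pi).
Proof.
move=> pim; apply: measurable_funM; first apply: measurable_funM.
- exact: pY_meas.
- exact: (measurableT_comp pim measurable_fst).
- exact: (measurableT_comp pX_meas (measurableT_comp measurable_fst measurable_fst)).
Qed.

Lemma jd0 (pi : X -> A -> R) : (forall x a, 0 <= pi x a) -> forall z, 0 <= jd pi z.
Proof. by move=> pi0 z; rewrite /jd /joint_density !mulr_ge0. Qed.

Lemma EpiE (pi : X -> A -> R)
  (pim : measurable_fun [set: (X * A)%type] (fun xa => pi xa.1 xa.2))
  (pi0 : forall x a, 0 <= pi x a) (h : (X * A) * R -> \bar R) :
  measurable_fun setT h -> (forall z, 0 <= h z)%E ->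
  Epi muX muA nu pX pY pi h =
  (\int[nu]_y \int[(muX \x muA)%E]_xa (h (xa, y) * (jd pi (xa, y))%:E))%E.
Proof.
move=> mh h0.
have mF : measurable_fun setT (fun z => (h z * (jd pi z)%:E)%E).
  by apply: emeasurable_funM => //; apply/measurable_EFinP; exact: mjd.
have F0 z : (0 <= h z * (jd pi z)%:E)%E by rewrite mule_ge0 // lee_fin jd0.
have H := (@fubini_tonelli2 _ _ _ _ _ (pm muX muA) nu _ mF F0).
rewrite /Epi; exact: H.
Qed.

Lemma inner_meas (pi : X -> A -> R)
  (pim : measurable_fun [set: (X * A)%type] (fun xa => pi xa.1 xa.2))
  (pi0 : forall x a, 0 <= pi x a) (h : (X * A) * R -> \bar R) :
  measurable_fun setT h -> (forall z, 0 <= h z)%E ->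
  measurable_fun [set: R]
    (fun y => \int[(muX \x muA)%E]_xa (h (xa, y) * (jd pi (xa, y))%:E))%E.
Proof.
move=> mh h0.
have mF : measurable_fun setT (fun z => (h z * (jd pi z)%:E)%E).
  by apply: emeasurable_funM => //; apply/measurable_EFinP; exact: mjd.
have F0 z : (0 <= h z * (jd pi z)%:E)%E by rewrite mule_ge0 // lee_fin jd0.
exact: (@measurable_fun_fubini_tonelli_G _ _ _ _ _ (pm muX muA) _ mF F0).
Qed.

Lemma mY_meas (pi : X -> A -> R)
  (pim : measurable_fun [set: (X * A)%type] (fun xa => pi xa.1 xa.2))
  (pi0 : forall x a, 0 <= pi x a) :
  measurable_fun [set: R] (marginal_Y muX muA pX pY pi).
Proof.
have mF : measurable_fun setT (fun z => (jd pi z)%:E).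
  by apply/measurable_EFinP; exact: mjd.
have F0 z : (0 <= (jd pi z)%:E)%E by rewrite lee_fin jd0.
exact: (@measurable_fun_fubini_tonelli_G _ _ _ _ _ (pm muX muA) _ mF F0).
Qed.

Lemma mY_ge0 (pi : X -> A -> R) (pi0 : forall x a, 0 <= pi x a) y :
  (0 <= marginal_Y muX muA pX pY pi y)%E.
Proof.
by apply: integral_ge0 => xa _; rewrite lee_fin !mulr_ge0.
Qed.

Lemma mY_int (pi : X -> A -> R)
  (pim : measurable_fun [set: (X * A)%type] (fun xa => pi xa.1 xa.2))
  (pi0 : forall x a, 0 <= pi x a)
  (pi1 : forall x, (\int[muA]_a (pi x a)%:E = 1)%E) :
  (\int[nu]_y marginal_Y muX muA pX pY pi y = 1)%E.
Proof.
have mF : measurable_fun setT (fun z => (jd pi z)%:E).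
  by apply/measurable_EFinP; exact: mjd.
have F0 z : (0 <= (jd pi z)%:E)%E by rewrite lee_fin jd0.
have H2 := @fubini_tonelli2 _ _ _ _ _ (pm muX muA) nu _ mF F0.
have H1 := @fubini_tonelli1 _ _ _ _ _ (pm muX muA) nu _ mF F0.
transitivity (\int[(pm muX muA \x nu)%E]_z (jd pi z)%:E)%E.
  by rewrite H2.
rewrite H1.
transitivity (\int[pm muX muA]_xa (pi xa.1 xa.2 * pX xa.1)%:E)%E.
  apply: eq_integral => xa _; rewrite /fubini_F /jd /joint_density /=.
  under eq_integral do rewrite -mulrA EFinM.
  rewrite ge0_integralZr //.
  - by rewrite pY_int1 mul1e.
  - apply/measurable_EFinP.
    exact: (measurable_fun_pair2 xa pY_meas).
  - by move=> y _; rewrite lee_fin.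
  - by rewrite lee_fin mulr_ge0.
have mG : measurable_fun setT (fun xa : X * A => (pi xa.1 xa.2 * pX xa.1)%:E).
  apply/measurable_EFinP; apply: measurable_funM => //.
  exact: (measurableT_comp pX_meas measurable_fst).
have G0 xa : (0 <= (pi xa.1 xa.2 * pX xa.1)%:E)%E by rewrite lee_fin mulr_ge0.
have H3 := @fubini_tonelli1 _ _ _ _ _ muX muA _ mG G0.
transitivity (\int[muX]_x fubini_F muA (fun xa : X * A => (pi xa.1 xa.2 * pX xa.1)%:E) x)%E.
  exact: H3.
rewrite -pX_int1; apply: eq_integral => x _; rewrite /fubini_F /=.
under eq_integral do rewrite EFinM.
rewrite ge0_integralZr //.
- by rewrite pi1 mul1e.
- apply/measurable_EFinP.
  exact: (measurable_fun_pair2 x pim).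
- by move=> a _; rewrite lee_fin.
- by rewrite lee_fin.
Qed.


Context (pib_ge0 : forall x a, 0 <= pib x a)
  (pib_meas : measurable_fun [set: (X * A)%type] (fun xa => pib xa.1 xa.2))
  (pib_int1 : forall x, (\int[muA]_a (pib x a)%:E = 1)%E)
  (pis_ge0 : forall x a, 0 <= pis x a)
  (pis_meas : measurable_fun [set: (X * A)%type] (fun xa => pis xa.1 xa.2))
  (pis_int1 : forall x, (\int[muA]_a (pis x a)%:E = 1)%E)
  (support : forall x a, 0 < pis x a -> 0 < pib x a).

Let mYb := marginal_Y muX muA pX pY pib.
Let mYs := marginal_Y muX muA pX pY pis.

Lemma pis0 x a : pib x a = 0 -> pis x a = 0.
Proof.
move=> hb; apply/eqP; rewrite eq_le pis_ge0 andbT leNgt; apply/negP => /support.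
by rewrite hb ltxx.
Qed.

Lemma rhoq xa y : pis xa.1 xa.2 / pib xa.1 xa.2 * jd pib (xa, y) = jd pis (xa, y).
Proof.
rewrite /jd /joint_density /=.
case: (eqVneq (pib xa.1 xa.2) 0) => hb.
  by rewrite hb pis0 // !(mulr0, mul0r).
by field.
Qed.

Lemma mrho : measurable_fun [set: (X * A)%type] (fun xa => pis xa.1 xa.2 / pib xa.1 xa.2).
Proof.
apply: measurable_funM => //.
exact: (measurableT_comp (@minv R) pib_meas).
Qed.

Lemma zero_imp y : mYb y = 0%E -> mYs y = 0%E.
Proof.
move=> H0.
have mq (pi : X -> A -> R) : measurable_fun [set: (X * A)%type] (fun xa => pi xa.1 xa.2) ->
    measurable_fun [set: (X * A)%type] (fun xa => (jd pi (xa, y))%:E).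
  move=> pim; apply/measurable_EFinP.
  exact: (measurable_fun_pair1 y (mjd _ pim)).
have Hae : ae_eq (muX \x muA)%E [set: (X * A)%type] (fun xa => (jd pib (xa, y))%:E) (cst 0%E).
  apply/(ae_eq_integral_abs _ measurableT (mq _ pib_meas)).
  rewrite -H0; apply: eq_integral => xa _.
  by rewrite gee0_abs // lee_fin jd0.
rewrite /mYs /marginal_Y.
transitivity (\int[(muX \x muA)%E]_xa (cst 0%E xa))%E; last by rewrite integral0.
apply: ae_eq_integral => //.
  exact: (mq _ pis_meas).
apply: filterS Hae => xa /(_ I) /= Hq _.
move: Hq => /eqP; rewrite eqe /jd /joint_density /= => /eqP.
move=> /eqP; rewrite !mulf_eq0 => /orP[/orP[]|] /eqP h.
- by rewrite h !mul0r.
- by rewrite pis0 // mulr0 mul0r.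
- by rewrite h mulr0.
Qed.

Lemma fin_ae (pi : X -> A -> R)
  (pim : measurable_fun [set: (X * A)%type] (fun xa => pi xa.1 xa.2))
  (pi0 : forall x a, 0 <= pi x a)
  (pi1 : forall x, (\int[muA]_a (pi x a)%:E = 1)%E) :
  {ae nu, forall y, marginal_Y muX muA pX pY pi y \is a fin_num}.
Proof.
have hint : nu.-integrable [set: R] (marginal_Y muX muA pX pY pi).
  apply/integrableP; split; first exact: mY_meas.
  under eq_integral do rewrite gee0_abs ?mY_ge0 //.
  by rewrite mY_int // ltry.
apply: filterS (integrable_ae measurableT hint) => y.
by apply.
Qed.

Lemma Gae : {ae nu, forall y, mYb y \is a fin_num /\ mYs y \is a fin_num}.
Proof.
apply: filterS2 (fin_ae _ pib_meas pib_ge0 pib_int1) (fin_ae _ pis_meas pis_ge0 pis_int1).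
by move=> y H1 H2; split.
Qed.

Lemma wmeas : measurable_fun [set: R] (w_of muX muA pX pY pis pib).
Proof.
rewrite /w_of; apply: measurable_funM.
  apply: measurableT_comp => //; exact: mY_meas.
apply: (measurableT_comp (@minv R)).
apply: measurableT_comp => //; exact: mY_meas.
Qed.

Lemma w_ge0 y : 0 <= w_of muX muA pX pY pis pib y.
Proof. by rewrite /w_of divr_ge0 // fine_ge0 // mY_ge0. Qed.

Lemma goody y : mYb y \is a fin_num -> mYs y \is a fin_num ->
  [/\ mYb y = (fine (mYb y))%:E, mYs y = (fine (mYs y))%:E &
      fine (mYs y) = w_of muX muA pX pY pis pib y * fine (mYb y)].
Proof.
move=> fb fs; split; [by rewrite fineK|by rewrite fineK|].
rewrite /w_of -/mYb -/mYs.
case: (eqVneq (fine (mYb y)) 0) => h.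
  have : mYb y = 0%E by rewrite -(fineK fb) h.
  by move/zero_imp => ->; rewrite h mulr0.
by rewrite divfK.
Qed.


Lemma qge0 (pi : X -> A -> R) (pi0 : forall x a, 0 <= pi x a) (xa : X * A) (y : R) :
  0 <= pY xa.1 xa.2 y * pi xa.1 xa.2 * pX xa.1.
Proof. by rewrite !mulr_ge0. Qed.

Lemma main_sec :
  let E := Epi muX muA nu pX pY pib in
  let rho := rho_of pis pib in
  let w := w_of muX muA pX pY pis pib in
  is_cond_exp_given_Y E rho w /\
  (forall f : R -> R, measurable_fun [set: R] f ->
     (E (fun z => ((rho z - w z.2) ^+ 2)%:E) <=
      E (fun z => ((rho z - f z.2) ^+ 2)%:E))%E).
Proof.
cbv zeta.
have mrhoz : measurable_fun [set: ((X * A) * R)%type] (rho_of pis pib).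
  exact: (measurableT_comp mrho measurable_fst).
have rho0 z : 0 <= rho_of pis pib z by rewrite /rho_of divr_ge0.
have mwz : measurable_fun [set: ((X * A) * R)%type]
    (fun z : (X * A) * R => w_of muX muA pX pY pis pib z.2).
  exact: (measurableT_comp wmeas measurable_snd).
split.
  split; first exact: wmeas.
  move=> B mB.
  have mBz : measurable_fun [set: ((X * A) * R)%type] (fun z : (X * A) * R => \1_B z.2 : R).
    by apply: measurableT_comp => //; exact: measurable_indic.
  have i0 (t : R) : 0 <= \1_B t :> R by rewrite indicE ler0n.
  have mh1 : measurable_fun setT (fun z : (X * A) * R => (rho_of pis pib z * \1_B z.2)%:E).
    by apply/measurable_EFinP; exact: measurable_funM.
  have h10 (z : (X * A) * R) : (0 <= (rho_of pis pib z * \1_B z.2)%:E)%E by rewrite lee_fin mulr_ge0.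
  have mh2 : measurable_fun setT (fun z : (X * A) * R => (w_of muX muA pX pY pis pib z.2 * \1_B z.2)%:E).
    by apply/measurable_EFinP; exact: measurable_funM.
  have h20 (z : (X * A) * R) : (0 <= (w_of muX muA pX pY pis pib z.2 * \1_B z.2)%:E)%E.
    by rewrite lee_fin mulr_ge0 // w_ge0.
  rewrite (EpiE _ pib_meas pib_ge0 _ mh1 h10) (EpiE _ pib_meas pib_ge0 _ mh2 h20).
  apply: ae_eq_integral => //.
  - exact: (inner_meas _ pib_meas pib_ge0 _ mh1 h10).
  - exact: (inner_meas _ pib_meas pib_ge0 _ mh2 h20).
  apply: filterS Gae => y [fb fs] _.
  have [eb es hSM] := goody _ fb fs.
  have mqs : measurable_fun setT (fun xa : X * A => (jd pis (xa, y))%:E).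
    apply/measurable_EFinP; exact: (measurable_fun_pair1 y (mjd _ pis_meas)).
  have mqb : measurable_fun setT (fun xa : X * A => (jd pib (xa, y))%:E).
    apply/measurable_EFinP; exact: (measurable_fun_pair1 y (mjd _ pib_meas)).
  transitivity ((\1_B y)%:E * mYs y)%E.
    rewrite /mYs /marginal_Y -ge0_integralZl_EFin //; last first.
      by move=> xa _; rewrite lee_fin; exact: qge0.
    apply: eq_integral => xa _ /=; rewrite -EFinM; congr EFin.
    by rewrite mulrAC rhoq mulrC.
  transitivity ((w_of muX muA pX pY pis pib y * \1_B y)%:E * mYb y)%E; last first.
    rewrite /mYb /marginal_Y -ge0_integralZl_EFin //; last 2 first.
      by move=> xa _; rewrite lee_fin; exact: qge0.
      by rewrite mulr_ge0 // w_ge0.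
  by rewrite es eb hSM -!EFinM; congr EFin; ring.
move=> f mf.
have mfz : measurable_fun [set: ((X * A) * R)%type] (fun z : (X * A) * R => f z.2).
  exact: (measurableT_comp mf measurable_snd).
have mh1 : measurable_fun setT
    (fun z : (X * A) * R => ((rho_of pis pib z - w_of muX muA pX pY pis pib z.2) ^+ 2)%:E).
  by apply/measurable_EFinP; apply: measurable_funX; exact: measurable_funB.
have h10 (z : (X * A) * R) : (0 <= ((rho_of pis pib z - w_of muX muA pX pY pis pib z.2) ^+ 2)%:E)%E.
  by rewrite lee_fin sqr_ge0.
have mh2 : measurable_fun setT (fun z : (X * A) * R => ((rho_of pis pib z - f z.2) ^+ 2)%:E).
  by apply/measurable_EFinP; apply: measurable_funX; exact: measurable_funB.
have h20 (z : (X * A) * R) : (0 <= ((rho_of pis pib z - f z.2) ^+ 2)%:E)%E.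
  by rewrite lee_fin sqr_ge0.
rewrite (EpiE _ pib_meas pib_ge0 _ mh1 h10) (EpiE _ pib_meas pib_ge0 _ mh2 h20).
apply: ae_ge0_le_integral => //.
- by move=> y _; apply: integral_ge0 => xa _; rewrite mule_ge0 // lee_fin ?sqr_ge0 //; exact: qge0.
- exact: (inner_meas _ pib_meas pib_ge0 _ mh1 h10).
- by move=> y _; apply: integral_ge0 => xa _; rewrite mule_ge0 // lee_fin ?sqr_ge0 //; exact: qge0.
- exact: (inner_meas _ pib_meas pib_ge0 _ mh2 h20).
apply: filterS Gae => y [fb fs] _.
have [eb es hSM] := goody _ fb fs.
rewrite [X in (X <= _)%E](eq_integral (fun xa : X * A =>
   (((pis xa.1 xa.2 / pib xa.1 xa.2 - w_of muX muA pX pY pis pib y) ^+ 2) *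
     jd pib (xa, y))%:E)); last by move=> xa _; rewrite EFinM.
rewrite [X in (_ <= X)%E](eq_integral (fun xa : X * A =>
   (((pis xa.1 xa.2 / pib xa.1 xa.2 - f y) ^+ 2) * jd pib (xa, y))%:E));
   last by move=> xa _; rewrite EFinM.
apply: (@var_min _ _ _ _ (fun xa : X * A => pis xa.1 xa.2 / pib xa.1 xa.2)
   (fun xa => jd pib (xa, y)) _ _ (fine (mYb y)) (fine (mYs y))).
- exact: mrho.
- exact: (measurable_fun_pair1 y (mjd _ pib_meas)).
- by move=> xa; rewrite divr_ge0.
- by move=> xa; exact: qge0.
- exact: w_ge0.
- by rewrite -eb.
- by under eq_integral do rewrite rhoq; rewrite -es.
- exact: hSM.
Qed.

End Main.

Theorem lemma2p1 (d1 d2 : measure_display) (X : measurableType d1)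
  (A : measurableType d2) (R : realType)
  (muX : {sigma_finite_measure set X -> \bar R})
  (muA : {sigma_finite_measure set A -> \bar R})
  (nu : {sigma_finite_measure set R -> \bar R})
  (pX : X -> R) (pY : X -> A -> R -> R) (pib pis : X -> A -> R)
  (pX_ge0 : forall x, 0 <= pX x)
  (pX_meas : measurable_fun [set: X] pX)
  (pX_int1 : (\int[muX]_x (pX x)%:E = 1)%E)
  (pY_ge0 : forall x a y, 0 <= pY x a y)
  (pY_meas : measurable_fun [set: (X * A) * R] (fun z => pY z.1.1 z.1.2 z.2))
  (pY_int1 : forall x a, (\int[nu]_y (pY x a y)%:E = 1)%E)
  (pib_ge0 : forall x a, 0 <= pib x a)
  (pib_meas : measurable_fun [set: X * A] (fun xa => pib xa.1 xa.2))
  (pib_int1 : forall x, (\int[muA]_a (pib x a)%:E = 1)%E)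
  (pis_ge0 : forall x a, 0 <= pis x a)
  (pis_meas : measurable_fun [set: X * A] (fun xa => pis xa.1 xa.2))
  (pis_int1 : forall x, (\int[muA]_a (pis x a)%:E = 1)%E)
  (support : forall x a, 0 < pis x a -> 0 < pib x a) :
  let E := Epi muX muA nu pX pY pib in
  let rho := rho_of pis pib in
  let w := w_of muX muA pX pY pis pib in
  is_cond_exp_given_Y E rho w /\
  (forall f : R -> R, measurable_fun [set: R] f ->
     (E (fun z => ((rho z - w z.2) ^+ 2)%:E) <=
      E (fun z => ((rho z - f z.2) ^+ 2)%:E))%E).
Proof.
by apply: main_sec.
Qed.
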